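(* Let $\mathcal{D}\subset\mathbb{R}^d$ be bounded with non-empty interior $\mathcal{D}^\circ$. For every $M\in G$ and every $t\in\mathcal{D}^\circ$ the minimum defining $F(M,t)$ exists (so $F(M,t)\in\mathbb{R}_{>0}$), and $F(\gamma M,t)=F(M,t)$ for all $\gamma\in\Gamma$. Hence $F$ is well-defined as a function $\Gamma\backslash G\times\mathcal{D}^\circ\to\mathbb{R}_{>0}$.
   Context: Let $G=\operatorname{SL}(d+1,\mathbb{R})$ and $\Gamma=\operatorname{SL}(d+1,\mathbb{Z})$; vectors are row vectors, and $\mathbb{Z}^{d+1}M$ is the lattice spanned by the rows of $M$. For $M\in G$ and $t\in\mathcal{D}$ define $F(M,t)=\min\{y>0\mid (x,y)\in\mathbb{Z}^{d+1}M,\ x\in\mathbb{R}^d,\ y\in\mathbb{R},\ x+t\in\mathcal{D}\}$ whenever the minimum exists, and $F(M,t)=\infty$ otherwise. *)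

(* Defs.v *)
From HB Require Import structures.
From mathcomp Require Import all_boot all_order all_algebra.
From mathcomp Require Import all_classical all_reals all_analysis.
Set Implicit Arguments. Unset Strict Implicit. Unset Printing Implicit Defensive.
Import Order.TTheory GRing.Theory Num.Theory.
Import numFieldNormedType.Exports.
Local Open Scope classical_set_scope.
Local Open Scope ring_scope.

Definition intmx (R : realType) m n (A : 'M[int]_(m, n)) : 'M[R]_(m, n) :=
  map_mx (fun z : int => z%:~R) A.

(* The set of heights y > 0 of lattice points (x, y) of Z^{d+1} M (row vectors,
   lattice spanned by rows of M) with x + t in D. *)
Definition Fset (R : realType) (d : nat) (D : set 'rV[R]_d)
    (M : 'M[R]_(d + 1)) (t : 'rV[R]_d) : set R :=
  [set y | 0 < y /\ exists k : 'rV[int]_(d + 1),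
      let v := @intmx R _ _ k *m M in
      D (lsubmx v + t) /\ rsubmx v ord0 ord0 = y].

Definition is_min_of (R : realType) (S : set R) (y : R) : Prop :=
  S y /\ forall z, S z -> y <= z.

Definition F (R : realType) (d : nat) (D : set 'rV[R]_d)
    (M : 'M[R]_(d + 1)) (t : 'rV[R]_d) : \bar R :=
  match pselect (exists y, is_min_of (Fset D M t) y) with
  | left h => (projT1 (cid h))%:E
  | right _ => +oo%E
  end.

(* Main.v *)
Require Import Defs.
From HB Require Import structures.
From mathcomp Require Import all_boot all_order all_algebra.
From mathcomp Require Import all_classical all_reals all_analysis.
From mathcomp Require Import ring lra zify.
Import Order.TTheory GRing.Theory Num.Theory.
Import numFieldNormedType.Exports.
Local Open Scope classical_set_scope.
Local Open Scope ring_scope.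
Set Implicit Arguments. Unset Strict Implicit.
Lemma seq_min (R : realType) (s : seq R) : s != [::] ->
  exists2 m, m \in s & forall z, z \in s -> m <= z.
Proof.
elim: s => [//|a s IH] _.
have [->|sne] := eqVneq s [::].
  by exists a; rewrite ?mem_seq1 // => z; rewrite mem_seq1 => /eqP->.
have [m ms mle] := IH sne.
have [am|ma] := leP a m.
  exists a; first by rewrite mem_head.
  move=> z; rewrite in_cons => /orP[/eqP->//|/mle]; exact: le_trans.
exists m; first by rewrite in_cons ms orbT.
move=> z; rewrite in_cons => /orP[/eqP->|/mle//]; exact: ltW.
Qed.

Lemma intmxE (R : realType) m n (A : 'M[int]_(m, n)) i j :
  (@intmx R _ _ A) i j = (A i j)%:~R.
Proof. by rewrite /intmx mxE. Qed.

Lemma card_ineq (N K p n : nat) : (0 < K)%N -> N = ((2 * K) ^ p)%N -> (p < n)%N ->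
  ((2 * N * K).+2 ^ p < N.+1 ^ n)%N.
Proof.
move=> K0 NE pn.
have h1 : ((2 * N * K).+2 <= 2 * K * N.+1)%N.
  have : (N * K + 1 <= K * N.+1)%N by rewrite mulnS; nia.
  nia.
apply: (@leq_ltn_trans ((2 * K * N.+1) ^ p)); first by elim: (p) => // q IH; rewrite !expnS leq_mul.
rewrite expnMn -NE.
apply: (@leq_trans (N.+1 ^ p.+1)); last exact: leq_pexp2l.
by rewrite expnS ltn_pmul2r // expn_gt0.
Qed.

Lemma floor_close (R : realType) (a b e : R) : 0 < e ->
  Num.floor (a / e) = Num.floor (b / e) -> `|a - b| < e.
Proof.
move=> e0 fE.
have [ha1 ha2] := andP (Num.Theory.floor_itv (a / e)).
have [hb1 hb2] := andP (Num.Theory.floor_itv (b / e)).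
rewrite fE in ha1 ha2.
move: ha1 ha2 hb1 hb2; rewrite intrD.
set z := (Num.floor (b / e))%:~R => ha1 ha2 hb1 hb2.
have : `|a / e - b / e| < 1.
  rewrite ltr_norml; apply/andP; split; lra.
rewrite -mulrBl normrM normfV (gtr0_norm e0) ltr_pdivrMr // mul1r.
done.
Qed.

Lemma pigeon (R : realType) n p (A : 'M[R]_(n, p)) (e : R) :
  (p < n)%N -> 0 < e ->
  exists k : 'rV[int]_n, k != 0 /\ forall j, `|(@intmx R _ _ k *m A) ord0 j| < e.
Proof.
move=> pn e0.
pose S := 1 + \sum_i \sum_j `|A i j|.
have S1 : 1 <= S by rewrite lerDl sumr_ge0 // => i _; rewrite sumr_ge0.
pose K := Num.bound (S / e).
have hK : S / e < K%:R by apply: archi_boundP; rewrite divr_ge0 //; [lra| exact: ltW].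
have K0 : (0 < K)%N.
  rewrite -(ltr0n R); apply: le_lt_trans hK; rewrite divr_ge0 //; [lra| exact: ltW].
pose N := ((2 * K) ^ p)%N.
pose x (b : {ffun 'I_n -> 'I_N.+1}) j := \sum_i ((b i : nat)%:R * A i j).
have xb : forall b j, `|x b j| <= N%:R * S.
  move=> b j; apply: le_trans (ler_norm_sum _ _ _) _.
  apply: (@le_trans _ _ (\sum_i N%:R * `|A i j|)).
    apply: ler_sum => i _; rewrite normrM normr_nat ler_wpM2r //.
    by rewrite ler_nat -ltnS.
  rewrite -mulr_sumr ler_wpM2l // /S.
  have : \sum_i `|A i j| <= \sum_i \sum_j `|A i j|.
    apply: ler_sum => i _.
    by rewrite (bigD1 j) //= lerDl sumr_ge0.
  lra.
pose fl b j : int := Num.floor (x b j / e) + ((N * K).+1)%:Z.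
have flb : forall b j, (0 <= fl b j) && (fl b j < ((2 * N * K).+2)%:Z).
  move=> b j.
  have hx : `|x b j / e| <= (N * K)%:R.
    rewrite normrM normfV (gtr0_norm e0) ler_pdivrMr // natrM.
    apply: le_trans (xb b j) _.
    rewrite -mulrA; apply: ler_wpM2l => //.
    by rewrite -ler_pdivrMr // ltW.
  move: hx; rewrite ler_norml => /andP[h1 h2].
  have f1 : (- ((N * K)%:Z) <= Num.floor (x b j / e)).
    by rewrite Num.Theory.floor_ge_int rmorphN /=.
  have f2 : (Num.floor (x b j / e) <= (N * K)%:Z).
    rewrite -(ler_int R); apply: le_trans (Num.Theory.floor_le _) _.
    by [].
  rewrite /fl; apply/andP; split; lia.
pose f (b : {ffun 'I_n -> 'I_N.+1}) : {ffun 'I_p -> 'I_(2 * N * K).+2} :=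
  [ffun j => inord `|fl b j|%N].
have ninj : ~~ injectiveb f.
  apply/negP => /injectiveP inj; have := @leq_card _ _ f inj.
  rewrite !card_ffun !card_ord leqNgt.
  by rewrite (@card_ineq N K p n K0 (erefl _) pn).
case/injectivePn: ninj => b1 [b2 neq feq].
exists (\row_i ((b1 i : nat)%:Z - (b2 i : nat)%:Z)); split.
  apply: contra neq => /eqP k0; apply/eqP/ffunP => i.
  have := congr1 (fun m : 'rV[int]_n => m 0 i) k0; rewrite !mxE => /eqP; rewrite subr_eq0.
  by move=> /eqP [] h; apply: val_inj.
move=> j.
have flE : fl b1 j = fl b2 j.
  have := congr1 (fun g : {ffun 'I_p -> 'I_(2 * N * K).+2} => val (g j)) feq; rewrite /= !ffunE.
  have [h1 h2] := andP (flb b1 j); have [h3 h4] := andP (flb b2 j).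
  rewrite !inordK; [|lia|lia].
  lia.
have -> : (@intmx R _ _ (\row_i ((b1 i : nat)%:Z - (b2 i : nat)%:Z)) *m A) ord0 j
    = x b1 j - x b2 j.
  rewrite mxE /x -sumrB; apply: eq_bigr => i _.
  by rewrite intmxE mxE intrD intrN -mulrBl.
apply: floor_close => //.
by move: flE; rewrite /fl => /addIr.
Qed.
Lemma intmxM (R : realType) m n p (A : 'M[int]_(m, n)) (B : 'M[int]_(n, p)) :
  @intmx R _ _ (A *m B) = @intmx R _ _ A *m @intmx R _ _ B.
Proof.
apply/matrixP => i j; rewrite !mxE rmorph_sum; apply: eq_bigr => l _.
by rewrite !mxE rmorphM.
Qed.

Lemma Fset_inv (R : realType) d (D : set 'rV[R]_d) (M : 'M[R]_(d + 1)) t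
  (g : 'M[int]_(d + 1)) : \det g = 1 ->
  Fset D (@intmx R _ _ g *m M) t = Fset D M t.
Proof.
move=> dg; apply/seteqP; split => y [y0 [k [hD hy]]]; split => //.
  by exists (k *m g); rewrite intmxM -mulmxA.
exists (k *m \adj g); rewrite mulmxA -intmxM -mulmxA mul_adj_mx dg.
by rewrite mulmx1.
Qed.

Lemma F_min (R : realType) d (D : set 'rV[R]_d) (M : 'M[R]_(d + 1)) t y :
  is_min_of (Fset D M t) y -> F D M t = y%:E.
Proof.
move=> hy; rewrite /F; case: pselect => [h|]; last by move=> /(_ (ex_intro _ y hy)).
case: cid => z [hz1 hz2] /=; congr (_%:E).
apply/le_anti/andP; split; [exact: hz2 hy.1| exact: hy.2].
Qed.

Lemma inv_bound (R : realType) n (M : 'M[R]_n) : M \in unitmx ->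
  exists S : R, 0 <= S /\ forall (k : 'rV[int]_n) (B : R), 0 <= B ->
    (forall j, `|(@intmx R _ _ k *m M) ord0 j| <= B) ->
    forall i, `|(k ord0 i)%:~R : R| <= B * S.
Proof.
move=> uM; exists (\sum_i \sum_j `|invmx M j i|); split.
  by apply: sumr_ge0 => i _; apply: sumr_ge0.
move=> k B B0 hB i.
have -> : (k ord0 i)%:~R = (@intmx R _ _ k *m M *m invmx M) ord0 i.
  by rewrite mulmxK // intmxE.
rewrite mxE; apply: le_trans (ler_norm_sum _ _ _) _.
apply: (@le_trans _ _ (\sum_j B * `|invmx M j i|)).
  by apply: ler_sum => j _; rewrite normrM ler_wpM2r.
rewrite -mulr_sumr ler_wpM2l //.
by rewrite [leRHS](bigD1 i) //= lerDl sumr_ge0 // => l _; rewrite sumr_ge0.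
Qed.

Lemma entry_le_norm (R : realType) m n (z : 'M[R]_(m, n)) i j : `|z i j| <= `|z|.
Proof.
have /mapP[k Hk ->] : `|z i j| \in [seq `|z x.1 x.2| | x : 'I_m * 'I_n].
  by apply/mapP; exists (i, j) => //=; rewrite mem_enum.
have -> : `|z| = mx_norm z by [].
by rewrite mx_normrE; apply/bigmax_geP; right => /=; exists k.
Qed.

Lemma int_lt1 (R : realType) (z : int) : `|z%:~R : R| < 1 -> z = 0.
Proof.
rewrite -intr_norm ltrz1 => h.
lia.
Qed.

Unset Implicit Arguments. Set Strict Implicit.

Theorem proposition2p1 (R : realType) (d : nat) (D : set 'rV[R]_d) :
  bounded_set D -> D° !=set0 ->
  forall M : 'M[R]_(d + 1), \det M = 1 ->
  forall t : 'rV[R]_d, D° t ->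
    (exists y : R, is_min_of (Fset D M t) y /\ 0 < y /\ F D M t = y%:E) /\
    (forall g : 'M[int]_(d + 1), \det g = 1 ->
       F D (@intmx R _ _ g *m M) t = F D M t).
Proof.
move=> bD _ M dM t hint.
split; last by move=> g dg; rewrite /F (@Fset_inv R d D M t g dg).
have uM : M \in unitmx by rewrite unitmxE dM unitr1.
have [S [S0 hS]] := inv_bound uM.
have [eps eps0 hball] : exists2 eps : R, 0 < eps &
    forall z : 'rV_d, (forall j, `|z ord0 j - t ord0 j| < eps) -> D z.
  case/nbhs_ballP: hint => eps /= eps0 hb.
  exists eps => // z hz; apply: hb.
  split => // i j; rewrite ord1 /ball /= distrC; exact: hz.
pose c : R := (S + 1)^-1.
have c0 : 0 < c by rewrite invr_gt0; lra.
have discr : forall k : 'rV[int]_(d + 1),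
    (forall j, `|(@intmx R _ _ k *m M) ord0 j| <= c) -> k = 0.
  move=> k hk; apply/rowP => i; rewrite mxE; apply: (@int_lt1 R).
  apply: le_lt_trans (hS k c (ltW c0) hk i) _.
  rewrite /c mulrC -(@ltr_pM2r _ (S + 1)); last lra.
  rewrite -mulrA mulVf ?mulr1 ?mul1r; lra.
pose A : 'M[R]_(d + 1, d) := \matrix_(i, j) M i (lshift 1 j).
have pdn : (d < d + 1)%N by rewrite addn1.
have me0 : 0 < Num.min eps c by rewrite lt_min eps0 c0.
have [k [k0 hk]] := pigeon A pdn me0.
have hA : forall (k : 'rV[int]_(d + 1)) j,
    (@intmx R _ _ k *m A) ord0 j = (@intmx R _ _ k *m M) ord0 (lshift 1 j).
  move=> k' j; rewrite !mxE; apply: eq_bigr => i _; rewrite ?mxE //.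
have ysplit : forall (k : 'rV[int]_(d + 1)) (j : 'I_(d + 1)),
    (exists j', j = lshift 1 j') \/ j = rshift d ord0.
  move=> _ j; case: (splitP j) => [j' hj|j' hj].
    by left; exists j'; apply: val_inj; rewrite /= hj.
  by right; apply: val_inj; rewrite /= hj (ord1 j') addn0.
have [k1 [hy1 hx1]] : exists k1 : 'rV[int]_(d + 1),
    0 < (@intmx R _ _ k1 *m M) ord0 (rshift d ord0) /\
    forall j, `|(@intmx R _ _ k1 *m M) ord0 (lshift 1 j)| < Num.min eps c.
  have hx : forall j, `|(@intmx R _ _ k *m M) ord0 (lshift 1 j)| < Num.min eps c.
    by move=> j; rewrite -hA.
  have [ylt|ygt|y0] := ltgtP ((@intmx R _ _ k *m M) ord0 (rshift d ord0)) 0.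
  - exists (- k).
    have hN : forall j, (@intmx R _ _ (- k) *m M) ord0 j = - (@intmx R _ _ k *m M) ord0 j.
      move=> j; rewrite !mxE -sumrN; apply: eq_bigr => i _.
      by rewrite !mxE rmorphN mulNr.
    split; first by rewrite hN oppr_gt0.
    by move=> j; rewrite hN normrN.
  - by exists k.
  - exfalso; move/negP: k0; apply; apply/eqP; apply: discr => j.
    case: (ysplit k j) => [[j' ->]|->]; last by rewrite y0 normr0 ltW.
    by have := hx j'; rewrite lt_min => /andP[_ /ltW].
pose vv (k : 'rV[int]_(d + 1)) := @intmx R _ _ k *m M.
pose y1 := vv k1 ord0 (rshift d ord0).
have Fy1 : Fset D M t y1.
  split => //; exists k1; split.
    apply: hball => j; rewrite mxE addrK mxE.
    by have := hx1 j; rewrite lt_min => /andP[].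
  by rewrite mxE.
have hD1 : D (lsubmx (vv k1) + t).
  apply: hball => j; rewrite mxE addrK mxE.
  by have := hx1 j; rewrite lt_min => /andP[].
have Dt : D t by apply: hball => j; rewrite subrr normr0.
have [Bx hBx] : exists Bx : R, forall z, D z -> forall j, `|z ord0 j| <= Bx.
  case: bD => B [Breal hB].
  exists (`|B| + 1) => z Dz j.
  apply: le_trans (entry_le_norm z ord0 j) _.
  apply: (hB (`|B| + 1)) => //.
  by apply: le_lt_trans (real_ler_norm Breal) _; rewrite ltrDl.
pose B' := 2 * `|Bx| + y1.
have B'0 : 0 <= B' by rewrite /B'; have := Fy1.1; have := normr_ge0 Bx; lra.
have kbound : forall k : 'rV[int]_(d + 1),
    0 < vv k ord0 (rshift d ord0) -> D (lsubmx (vv k) + t) ->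
    vv k ord0 (rshift d ord0) <= y1 -> forall i, `|(k ord0 i)%:~R : R| <= B' * S.
  move=> kk hy hD hle; apply: hS => // j.
  case: (ysplit kk j) => [[j' ->]|->].
    have -> : vv kk ord0 (lshift 1 j') = (lsubmx (vv kk) + t) ord0 j' - t ord0 j'.
      by rewrite [in RHS]mxE addrK [in RHS]mxE.
    apply: le_trans (ler_normB _ _) _.
    have := hBx _ hD j'; have := hBx _ Dt j'; have := ler_norm Bx.
    rewrite /B'; have := Fy1.1; lra.
  rewrite gtr0_norm //; rewrite /B'; have := normr_ge0 Bx; lra.
pose C := Num.bound (B' * S).
have hC : B' * S < C%:R by apply: archi_boundP; rewrite mulr_ge0.
pose T := {ffun 'I_(d + 1) -> 'I_(2 * C).+1}.
pose dec (b : T) : 'rV[int]_(d + 1) := \row_i ((b i : nat)%:Z - C%:Z).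
pose enc (k : 'rV[int]_(d + 1)) : T := [ffun i => inord (absz (k ord0 i + C%:Z))].
have dec_enc : forall kk : 'rV[int]_(d + 1), (forall i, `|kk ord0 i| < C%:Z) ->
    dec (enc kk) = kk.
  move=> kk hkk; apply/matrixP => a i; have e01 : (0 : 'I_1) = ord0 by apply: val_inj.
  rewrite ord1 e01 !mxE ffunE inordK; have := hkk i; lia.
have kC : forall kk : 'rV[int]_(d + 1),
    0 < vv kk ord0 (rshift d ord0) -> D (lsubmx (vv kk) + t) ->
    vv kk ord0 (rshift d ord0) <= y1 -> forall i, `|kk ord0 i| < C%:Z.
  move=> kk hy hD hle i; rewrite -(ltr_int R) intr_norm.
  exact: le_lt_trans (kbound kk hy hD hle i) hC.
pose yv (b : T) := vv (dec b) ord0 (rshift d ord0).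
pose Pb (b : T) : bool := `[< 0 < yv b /\ D (lsubmx (vv (dec b)) + t) >].
pose s := map yv [seq b <- enum T | Pb b].
have ins : forall kk : 'rV[int]_(d + 1),
    0 < vv kk ord0 (rshift d ord0) -> D (lsubmx (vv kk) + t) ->
    vv kk ord0 (rshift d ord0) <= y1 -> vv kk ord0 (rshift d ord0) \in s.
  move=> kk hy hD hle; have de := dec_enc kk (kC kk hy hD hle).
  apply/mapP; exists (enc kk); last by rewrite /yv de.
  rewrite mem_filter mem_enum andbT; apply/asboolP.
  by rewrite /yv de.
have [m ms mmin] : exists2 m, m \in s & forall z, z \in s -> m <= z.
  apply: seq_min; apply/eqP => s0.
  have := ins k1 hy1 hD1 (lexx _); rewrite -/(vv k1) -/y1.
  by rewrite s0.
have Fm : Fset D M t m.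
  move/mapP: ms => [b]; rewrite mem_filter => /andP[/asboolP [h1 h2] _] ->.
  split => //; exists (dec b); split => //.
  by rewrite mxE.
have ismin : is_min_of (Fset D M t) m.
 split => // z [z0 [kz [hDz hz]]].
have yz : vv kz ord0 (rshift d ord0) = z by rewrite -hz [in RHS]mxE.
case: (leP z y1) => zy1.
  apply: mmin; rewrite -yz; apply: ins; rewrite ?yz //.
apply: le_trans (ltW zy1).
apply: mmin; apply: ins k1 hy1 hD1 (lexx _).
by exists m; split => //; split; [exact: Fm.1 | exact: F_min ismin].
Qed.
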